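(* Let $g$ be a symplectic potential on $P$ with $y=\partial g/\partial x$, $w_j=e^{y_j+i\theta_j}$, and $X_g=-\sum_jy_j\partial_{\theta_j}$ its Hamiltonian vector field on $\check X_P$. Then for every $m\in\mathbb Z^n$ the series $e^{iX_g}e^{im\cdot\theta}=\sum_{k\ge0}\frac{i^k}{k!}X_g^k\,e^{im\cdot\theta}$ converges and equals $w^m=w_1^{m_1}\cdots w_n^{m_n}$, and the time-$i$ flow $e^{iX_g}$ induces an algebra isomorphism from the algebra $\mathcal A$ generated by the characters $e^{im\cdot\theta}$, $m\in\mathbb Z^n$, of $\mathbb T^n$ onto the algebra generated by the $I_g$-monomial (meromorphic) functions $w^m$, $m\in\mathbb Z^n$, on $(X_P,I_g)$, sending $e^{im\cdot\theta}\mapsto w^m$.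
   Context: Let $P=\{x:\ell_j(x)=\langle\nu_j,x\rangle+\lambda_j\ge0\}$ be a Delzant polytope with interior $\check P$, $(X_P,\omega)$ the associated compact symplectic toric manifold with moment map $\mu$ and action-angle coordinates $(x,\theta)$ on $\check X_P=\mu^{-1}(\check P)\cong\check P\times\mathbb T^n$, $\omega=\sum dx^j\wedge d\theta_j$. A symplectic potential is $g=\frac12\sum\ell_j\log\ell_j+\varphi$, $\varphi\in C^\infty(P)$, with positive definite Hessian on $\check P$ and $\det H_g=(\alpha\prod\ell_j)^{-1}$ for a smooth positive $\alpha$ on $P$; it determines a toric complex structure $I_g$ on $X_P$ for which $(\check X_P,I_g)\cong(\mathbb C^* )^n$ via $(x,\theta)\mapsto w=e^{y+i\theta}$, $y=\partial g/\partial x$. *)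

(* Defs.v *)
From mathcomp Require Import all_boot all_order all_algebra.
From mathcomp Require Import all_classical all_reals all_analysis.
From mathcomp Require Import complex.
Set Implicit Arguments. Unset Strict Implicit. Unset Printing Implicit Defensive.
Import Order.TTheory GRing.Theory Num.Theory numFieldNormedType.Exports.
Local Open Scope ring_scope.
Local Open Scope classical_set_scope.

Definition cRe (R : realType) (z : R[i]) : R := complex.Re z.
Definition cIm (R : realType) (z : R[i]) : R := complex.Im z.

Definition dotR (R : realType) (n : nat) (u v : 'rV[R]_n) : R :=
  \sum_(i < n) u 0 i * v 0 i.

Definition intvec (R : realType) (n : nat) (m : 'rV[int]_n) : 'rV[R]_n :=
  \row_(i < n) (m 0 i)%:~R.

Definition ebasis (R : realType) (n : nat) (j : 'I_n) : 'rV[R]_n :=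
  delta_mx 0 j.

Definition ell (R : realType) (n d : nat) (nu : 'I_d -> 'rV[int]_n)
  (lam : 'I_d -> R) (j : 'I_d) (x : 'rV[R]_n) : R :=
  dotR (intvec R (nu j)) x + lam j.

Definition polytope (R : realType) (n d : nat) (nu : 'I_d -> 'rV[int]_n)
  (lam : 'I_d -> R) : set 'rV[R]_n :=
  [set x | forall j, 0 <= ell nu lam j x].

Definition polytope_int (R : realType) (n d : nat) (nu : 'I_d -> 'rV[int]_n)
  (lam : 'I_d -> R) : set 'rV[R]_n :=
  [set x | forall j, 0 < ell nu lam j x].

Definition active (R : realType) (n d : nat) (nu : 'I_d -> 'rV[int]_n)
  (lam : 'I_d -> R) (x : 'rV[R]_n) : {set 'I_d} :=
  [set j | ell nu lam j x == 0].

(* x is a vertex of P: x in P and the normals of the facets through x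
   span R^n (equivalently, x is an extreme point of P). *)
Definition is_vertex (R : realType) (n d : nat) (nu : 'I_d -> 'rV[int]_n)
  (lam : 'I_d -> R) (x : 'rV[R]_n) : Prop :=
  polytope nu lam x /\
  forall v : 'rV[R]_n, exists c : 'I_d -> R,
    (forall j, j \notin active nu lam x -> c j = 0) /\
    v = \sum_(j < d) c j *: intvec R (nu j).

(* Delzant polytope, given by a minimal presentation with inward normals
   nu_j in Z^n:  P is compact with nonempty interior, every l_j cuts out a
   facet (the presentation is irredundant), and at every vertex exactly n
   facets meet and their normals form a Z-basis of Z^n (n vectors spanning
   Z^n over Z). *)
Definition Delzant (R : realType) (n d : nat) (nu : 'I_d -> 'rV[int]_n)
  (lam : 'I_d -> R) : Prop :=
  [/\ bounded_set (polytope nu lam),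
      polytope_int nu lam !=set0,
      (forall j, exists x, polytope nu lam x /\ ell nu lam j x = 0 /\
                   (forall i, i != j -> 0 < ell nu lam i x)) &
      (forall x, is_vertex nu lam x ->
         #|active nu lam x| = n /\
         forall z : 'rV[int]_n, exists c : 'I_d -> int,
           (forall j, j \notin active nu lam x -> c j = 0) /\
           z = \sum_(j < d) c j *: nu j)].

Fixpoint iterD (R : realType) (n : nat) (vs : seq 'rV[R]_n)
  (f : 'rV[R]_n -> R) : 'rV[R]_n -> R :=
  match vs with
  | [::] => f
  | v :: vs' => fun x => derive (iterD vs' f) x v
  end.

Definition smooth_on (R : realType) (n : nat) (U : set 'rV[R]_n)
  (f : 'rV[R]_n -> R) : Prop :=
  open U /\ forall (vs : seq 'rV[R]_n) x, U x -> differentiable (iterD vs f) x.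

(* f in C^infty(K) for a closed set K: f is smooth on an open
   neighbourhood of K. *)
Definition smooth_up_to (R : realType) (n : nat) (K : set 'rV[R]_n)
  (f : 'rV[R]_n -> R) : Prop :=
  exists U, K `<=` U /\ smooth_on U f.

Definition hessian (R : realType) (n : nat) (g : 'rV[R]_n -> R)
  (x : 'rV[R]_n) : 'M[R]_n :=
  \matrix_(i < n, j < n) iterD [:: ebasis R i; ebasis R j] g x.

Definition symplectic_potential (R : realType) (n d : nat)
  (nu : 'I_d -> 'rV[int]_n) (lam : 'I_d -> R) (g : 'rV[R]_n -> R) : Prop :=
  (exists phi : 'rV[R]_n -> R,
     smooth_up_to (polytope nu lam) phi /\
     forall x, polytope nu lam x ->
       g x = 2^-1 * \sum_(j < d) ell nu lam j x * ln (ell nu lam j x) + phi x)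
  /\ (forall x, polytope_int nu lam x ->
        forall v : 'rV[R]_n, v != 0 -> 0 < (v *m hessian g x *m v^T) 0 0)
  /\ (exists alpha : 'rV[R]_n -> R,
        smooth_up_to (polytope nu lam) alpha /\
        (forall x, polytope nu lam x -> 0 < alpha x) /\
        forall x, polytope_int nu lam x ->
          \det (hessian g x) = (alpha x * \prod_(j < d) ell nu lam j x)^-1).

Definition ycoord (R : realType) (n : nat) (g : 'rV[R]_n -> R) (j : 'I_n)
  (x : 'rV[R]_n) : R :=
  derive g x (ebasis R j).

(* Complex functions on \check X_P = \check P x T^n, in action-angle   *)
(* coordinates (x, theta), theta in R^n taken mod 2 pi.                *)

Definition cfun (R : realType) (n : nat) := 'rV[R]_n -> 'rV[R]_n -> R[i].

Definition expi (R : realType) (t : R) : R[i] := Complex (cos t) (sin t).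

Definition character (R : realType) (n : nat) (m : 'rV[int]_n) : cfun R n :=
  fun x theta => expi (dotR (intvec R m) theta).

Definition wcoord (R : realType) (n : nat) (g : 'rV[R]_n -> R) (j : 'I_n)
  : cfun R n :=
  fun x theta => ((expR (ycoord g j x))%:C)%C * expi (theta 0 j).

Definition wmonomial (R : realType) (n : nat) (g : 'rV[R]_n -> R)
  (m : 'rV[int]_n) : cfun R n :=
  fun x theta => \prod_(j < n) (wcoord g j x theta) ^ (m 0 j).

Definition dtheta (R : realType) (n : nat) (j : 'I_n) (f : cfun R n)
  : cfun R n :=
  fun x theta =>
    Complex (derive (fun t => cRe (f x t)) theta (ebasis R j))
            (derive (fun t => cIm (f x t)) theta (ebasis R j)).

Definition Xg (R : realType) (n : nat) (g : 'rV[R]_n -> R) (f : cfun R n)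
  : cfun R n :=
  fun x theta => - \sum_(j < n) ((ycoord g j x)%:C)%C * dtheta j f x theta.

Definition expiX_partial (R : realType) (n : nat) (g : 'rV[R]_n -> R)
  (f : cfun R n) (N : nat) : cfun R n :=
  fun x theta =>
    \sum_(k < N) (('i)%C ^+ k / (k`!)%:R) * iter k (Xg g) f x theta.

Definition expiX_converges_to (R : realType) (n : nat) (g : 'rV[R]_n -> R)
  (f : cfun R n) (x theta : 'rV[R]_n) (h : R[i]) : Prop :=
  (fun N => cRe (expiX_partial g f N x theta)) @ \oo --> cRe h /\
  (fun N => cIm (expiX_partial g f N x theta)) @ \oo --> cIm h.

Definition subalgebra (R : realType) (n : nat) (S : set (cfun R n)) : Prop :=
  [/\ S (fun _ _ => 1),
      (forall f h, S f -> S h -> S (fun x t => f x t + h x t)),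
      (forall f h, S f -> S h -> S (fun x t => f x t * h x t)) &
      (forall (c : R[i]) f, S f -> S (fun x t => c * f x t))].

Definition gen_algebra (R : realType) (n : nat) (G : set (cfun R n))
  : set (cfun R n) :=
  [set f | forall S, subalgebra S -> G `<=` S -> S f].

(* Main.v *)
Require Import Defs.
From mathcomp Require Import all_boot all_order all_algebra.
From mathcomp Require Import all_classical all_reals all_analysis.
From mathcomp Require Import complex ring.
Import Order.TTheory GRing.Theory Num.Theory numFieldNormedType.Exports.
Local Open Scope ring_scope.
Local Open Scope classical_set_scope.

Section S.
Variable R : realType.


Lemma is_derive_aff (c d x : R) : is_derive x 1 (fun h : R => c * h + d) c.
Proof.
have H1 : is_derive x 1 (c \*: (@id R)) (c *: 1) by apply: is_deriveZ.
have H2 := is_deriveD H1 (@is_derive_cst _ _ _ d x 1).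
have E : c *: (1:R) + 0 = c by rewrite addr0; exact: mulr1.
rewrite -[X in is_derive _ _ _ X]E.
exact: H2.
Qed.

Lemma is_derive_cosaff (c d x : R) :
  is_derive x 1 (fun h : R => cos (c * h + d)) (- sin (c * x + d) * c).
Proof.
have -> : (fun h : R => cos (c * h + d)) = cos \o (fun h => c * h + d) by [].
exact: (is_derive1_comp (is_derive_cos _) (is_derive_aff _ _ _)).
Qed.

Lemma is_derive_sinaff (c d x : R) :
  is_derive x 1 (fun h : R => sin (c * h + d)) (cos (c * x + d) * c).
Proof.
have -> : (fun h : R => sin (c * h + d)) = sin \o (fun h => c * h + d) by [].
exact: (is_derive1_comp (is_derive_sin _) (is_derive_aff _ _ _)).
Qed.

Lemma derive_dir (n : nat) (f : 'rV[R]_n -> R) th v :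
  derive f th v = derive (fun h : R => f (h *: v + th)) 0 1.
Proof.
rewrite /derive.
have -> : (fun h : R => h^-1 *: ((f \o shift th) (h *: v) - f th)) =
  (fun h : R => h^-1 *: (((fun h : R => f (h *: v + th)) \o shift 0) (h *: 1)
      - f (0 *: v + th))).
  by apply/funext => h /=; rewrite addr0 scale0r add0r [h *: 1]mulr1.
by [].
Qed.
Local Notation C := (R[i]).

Lemma cE (z w : C) : cRe z = cRe w -> cIm z = cIm w -> z = w.
Proof. by case: z => a b; case: w => c d /= -> ->. Qed.

Lemma ReD (z w : C) : cRe (z + w) = cRe z + cRe w.
Proof. by case: z => a b; case: w. Qed.
Lemma ImD (z w : C) : cIm (z + w) = cIm z + cIm w.
Proof. by case: z => a b; case: w. Qed.
Lemma ReM (z w : C) : cRe (z * w) = cRe z * cRe w - cIm z * cIm w.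
Proof. by case: z => a b; case: w. Qed.
Lemma ImM (z w : C) : cIm (z * w) = cRe z * cIm w + cIm z * cRe w.
Proof. by case: z => a b; case: w. Qed.
Lemma ReC (r : R) : cRe (r%:C)%C = r. Proof. by []. Qed.
Lemma ImC (r : R) : cIm (r%:C)%C = 0. Proof. by []. Qed.
Lemma Rei : cRe ('i)%C = 0 :> R. Proof. by []. Qed.
Lemma Imi : cIm ('i)%C = 1 :> R. Proof. by []. Qed.
Lemma ReN (z : C) : cRe (- z) = - cRe z. Proof. by case: z. Qed.
Lemma ImN (z : C) : cIm (- z) = - cIm z. Proof. by case: z. Qed.
Lemma Reexpi (t : R) : cRe (expi t) = cos t. Proof. by []. Qed.
Lemma Imexpi (t : R) : cIm (expi t) = sin t. Proof. by []. Qed.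

Lemma Re_sum T (s : seq T) (F : T -> C) : cRe (\sum_(p <- s) F p) = \sum_(p <- s) cRe (F p).
Proof. elim: s => [|a s IH]; first by rewrite !big_nil.
by rewrite !big_cons ReD IH. Qed.
Lemma Im_sum T (s : seq T) (F : T -> C) : cIm (\sum_(p <- s) F p) = \sum_(p <- s) cIm (F p).
Proof. elim: s => [|a s IH]; first by rewrite !big_nil.
by rewrite !big_cons ImD IH. Qed.

Lemma expiD (a b : R) : expi (a + b) = expi a * expi b :> C.
Proof. by apply: cE; rewrite ?ReM ?ImM /= ?cosD ?sinD; ring. Qed.
Lemma expi0 : expi 0 = 1 :> C.
Proof. by apply: cE; rewrite /= ?cos0 ?sin0. Qed.


Variable n : nat.
Implicit Types (m : 'rV[int]_n) (t v : 'rV[R]_n).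

Lemma dotR_lin (u : 'rV[R]_n) (h : R) v t :
  dotR u (h *: v + t) = h * dotR u v + dotR u t.
Proof.
rewrite /dotR mulr_sumr -big_split; apply: eq_bigr => i _.
by rewrite !mxE mulrDr mulrCA.
Qed.

Lemma dot_addm m m' t :
  dotR (intvec R (m + m')) t = dotR (intvec R m) t + dotR (intvec R m') t.
Proof.
rewrite /dotR -big_split; apply: eq_bigr => i _.
by rewrite !mxE intrD mulrDl.
Qed.

Lemma dot_0m t : dotR (intvec R 0) t = 0.
Proof.
rewrite /dotR big1 // => i _; by rewrite !mxE mul0r.
Qed.

Lemma dot_ebasis (u : 'rV[R]_n) j : dotR u (ebasis R j) = u 0 j.
Proof.
rewrite /dotR (bigD1 j) //= big1 ?addr0.
  by rewrite /ebasis mxE !eqxx mulr1.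
by move=> i /negbTE ij; rewrite /ebasis mxE ij andbF mulr0.
Qed.

Lemma is_derive_trigsum T (s : seq T) (c d al be : T -> R) (x : R) :
  is_derive x 1 (fun h : R => \sum_(p <- s) (al p * cos (c p * h + d p) + be p * sin (c p * h + d p)))
    (\sum_(p <- s) (al p * (- sin (c p * x + d p) * c p) + be p * (cos (c p * x + d p) * c p))).
Proof.
elim: s => [|a s IH].
  have -> : (fun h : R => \sum_(p <- [::]) (al p * cos (c p * h + d p) + be p * sin (c p * h + d p)))
     = cst 0 by apply/funext => h; rewrite big_nil.
  by rewrite big_nil; apply: is_derive_cst.
rewrite big_cons.
have -> : (fun h : R => \sum_(p <- a :: s) (al p * cos (c p * h + d p) + be p * sin (c p * h + d p)))
  = (al a \*: (fun h => cos (c a * h + d a)) + be a \*: (fun h => sin (c a * h + d a)))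
     + (fun h : R => \sum_(p <- s) (al p * cos (c p * h + d p) + be p * sin (c p * h + d p))).
  by apply/funext => h; rewrite big_cons.
apply: is_deriveD => //.
apply: is_deriveD; apply: is_deriveZ; [exact: is_derive_cosaff | exact: is_derive_sinaff].
Qed.

Definition dot m t := dotR (intvec R m) t.

Definition Gf (s : seq ('rV[int]_n * ('rV[R]_n -> C))) : cfun R n :=
  fun x t => \sum_(p <- s) p.2 x * character p.1 x t.

Lemma Re_Gf s x t : cRe (Gf s x t) =
  \sum_(p <- s) (cRe (p.2 x) * cos (dot p.1 t) + (- cIm (p.2 x)) * sin (dot p.1 t)).
Proof.
rewrite /Gf Re_sum; apply: eq_bigr => p _.
by rewrite ReM /character Reexpi Imexpi mulNr.
Qed.

Lemma Im_Gf s x t : cIm (Gf s x t) =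
  \sum_(p <- s) (cIm (p.2 x) * cos (dot p.1 t) + cRe (p.2 x) * sin (dot p.1 t)).
Proof.
rewrite /Gf Im_sum; apply: eq_bigr => p _.
by rewrite ImM /character Reexpi Imexpi addrC.
Qed.

Lemma derive_trig T (s : seq T) (u : T -> 'rV[R]_n) (al be : T -> R) th v :
  derive (fun t => \sum_(p <- s) (al p * cos (dotR (u p) t) + be p * sin (dotR (u p) t))) th v
  = \sum_(p <- s) (al p * (- sin (dotR (u p) th) * dotR (u p) v)
                   + be p * (cos (dotR (u p) th) * dotR (u p) v)).
Proof.
rewrite derive_dir.
have -> : (fun h : R => \sum_(p <- s) (al p * cos (dotR (u p) (h *: v + th))
                     + be p * sin (dotR (u p) (h *: v + th)))) =
  (fun h : R => \sum_(p <- s) (al p * cos (dotR (u p) v * h + dotR (u p) th)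
                     + be p * sin (dotR (u p) v * h + dotR (u p) th))).
  apply/funext => h; apply: eq_bigr => p _; by rewrite dotR_lin [h * _]mulrC.
rewrite (@derive_val _ _ _ _ _ _ _ (is_derive_trigsum T s (fun p => dotR (u p) v) (fun p => dotR (u p) th) al be 0)).
by apply: eq_bigr => p _; rewrite mulr0 add0r.
Qed.

Lemma dtheta_Gf j s x th : dtheta j (Gf s) x th =
  \sum_(p <- s) ('i * (((p.1 0 j)%:~R : R)%:C)%C * p.2 x * character p.1 x th)%C.
Proof.
rewrite /dtheta.
have -> : (fun t => cRe (Gf s x t)) = fun t =>
  \sum_(p <- s) (cRe (p.2 x) * cos (dot p.1 t) + (- cIm (p.2 x)) * sin (dot p.1 t)).
  by apply/funext => t; exact: Re_Gf.
have -> : (fun t => cIm (Gf s x t)) = fun t =>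
  \sum_(p <- s) (cIm (p.2 x) * cos (dot p.1 t) + cRe (p.2 x) * sin (dot p.1 t)).
  by apply/funext => t; exact: Im_Gf.
rewrite /dot !(derive_trig _ _ (fun p => intvec R p.1)).
apply: cE.
  rewrite [in LHS]/cRe /= -/(cRe _) Re_sum; apply: eq_bigr => p _.
  rewrite !(ReM, ImM, ReC, ImC, Rei, Imi) /character Reexpi Imexpi dot_ebasis mxE.
  ring.
rewrite [in LHS]/cIm /= -/(cIm _) Im_sum; apply: eq_bigr => p _.
rewrite !(ReM, ImM, ReC, ImC, Rei, Imi) /character Reexpi Imexpi dot_ebasis mxE.
ring.
Qed.

Definition Yr (g : 'rV[R]_n -> R) m x := \sum_(j < n) ((m 0 j)%:~R : R) * ycoord g j x.

Definition stepX (g : 'rV[R]_n -> R) (p : 'rV[int]_n * ('rV[R]_n -> C)) :=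
  (p.1, fun x => (- 'i * ((Yr g p.1 x)%:C)%C) * p.2 x)%C.

Lemma Xg_Gf g s : Xg g (Gf s) = Gf (map (stepX g) s).
Proof.
apply/funext => x; apply/funext => t.
rewrite /Xg [in RHS]/Gf big_map.
rewrite (eq_bigr (fun j => (ycoord g j x)%:C%C * \sum_(p <- s) ('i * (((p.1 0 j)%:~R : R)%:C)%C * p.2 x * character p.1 x t)%C)); last first.
  move=> j _; congr (_ * _); exact: dtheta_Gf.
under eq_bigr do rewrite mulr_sumr.
rewrite exchange_big /= -sumrN; apply: eq_bigr => p _.
rewrite /stepX /= /Yr rmorph_sum /= mulr_sumr !mulr_suml -sumrN.
apply: eq_bigr => j _; rewrite rmorphM /=; ring.
Qed.

Definition stepXk (g : 'rV[R]_n -> R) k (p : 'rV[int]_n * ('rV[R]_n -> C)) :=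
  (p.1, fun x => (- 'i * ((Yr g p.1 x)%:C)%C) ^+ k * p.2 x)%C.

Lemma iter_Xg_Gf g k s : iter k (Xg g) (Gf s) = Gf (map (stepXk g k) s).
Proof.
elim: k => [|k IH].
  rewrite /=; congr Gf; rewrite -[LHS]map_id; apply: eq_map => -[m a] /=.
  by congr pair; apply/funext => x; rewrite expr0 mul1r.
rewrite iterS IH Xg_Gf -map_comp; congr Gf; apply: eq_map => -[m a] /=.
by rewrite /stepX /stepXk /=; congr pair; apply/funext => x; rewrite exprS mulrA.
Qed.

Lemma seriesE (u : R ^nat) N : series u N = \sum_(k < N) u k.
Proof. by rewrite /series /= big_mkord. Qed.

Definition psum (g : 'rV[R]_n -> R) (e : R) (f : cfun R n) N x t :=
  \sum_(k < N) ((((e%:C)%C * 'i%C) ^+ k / (k`!)%:R) * iter k (Xg g) f x t).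

Lemma key_mul (e y : R) : ((e%:C)%C * 'i%C) * (- 'i%C * (y%:C)%C) = ((e * y)%:C)%C :> C.
Proof. by apply: cE; rewrite /= ; ring. Qed.

Lemma psum_Gf g e s N x t : psum g e (Gf s) N x t =
  \sum_(p <- s) (p.2 x * character p.1 x t * ((series (exp_coeff (e * Yr g p.1 x)) N)%:C)%C).
Proof.
rewrite /psum.
rewrite (eq_bigr (fun k : 'I_N => \sum_(p <- s) ((((e%:C)%C * 'i%C) ^+ k / (k`!)%:R) *
    ((stepXk g k p).2 x * character p.1 x t)))); last first.
  move=> k _; rewrite -mulr_sumr; congr (_ * _).
  by rewrite (congr1 (fun F => F x t) (iter_Xg_Gf g k s)) /Gf big_map.
rewrite exchange_big /=; apply: eq_bigr => p _.
rewrite seriesE [in RHS]rmorph_sum [in RHS]mulr_sumr; apply: eq_bigr => k _.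
rewrite /stepXk /exp_coeff /=.
have -> : (((e * Yr g p.1 x) ^+ k / (k`!)%:R)%:C)%C =
   ((e%:C)%C * 'i%C) ^+ k * (- 'i%C * ((Yr g p.1 x)%:C)%C) ^+ k / (k`!)%:R :> C.
  by rewrite -exprMn key_mul rmorphM rmorphXn fmorphV rmorph_nat.
ring.
Qed.

Lemma cvg_bigsum T (s : seq T) (u : T -> nat -> R) (l : T -> R) :
  (forall p, u p @ \oo --> l p) ->
  (fun N => \sum_(p <- s) u p N) @ \oo --> \sum_(p <- s) l p.
Proof.
move=> H; elim: s => [|a s IH].
  rewrite big_nil; have -> : (fun N => \sum_(p <- [::]) u p N) = cst 0.
    by apply/funext => N; rewrite big_nil.
  exact: cvg_cst.
rewrite big_cons; have -> : (fun N => \sum_(p <- a :: s) u p N) =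
   (u a + (fun N => \sum_(p <- s) u p N)).
  by apply/funext => N; rewrite big_cons.
exact: cvgD.
Qed.

Lemma cvg_expser (z : R) : series (exp_coeff z) @ \oo --> expR z.
Proof. exact: is_cvg_series_exp_coeff. Qed.

Definition Glim g e s : cfun R n := fun x t =>
  \sum_(p <- s) (p.2 x * character p.1 x t * ((expR (e * Yr g p.1 x))%:C)%C).

Lemma psum_cvg g e s x t :
  (fun N => cRe (psum g e (Gf s) N x t)) @ \oo --> cRe (Glim g e s x t) /\
  (fun N => cIm (psum g e (Gf s) N x t)) @ \oo --> cIm (Glim g e s x t).
Proof.
split.
  have -> : (fun N => cRe (psum g e (Gf s) N x t)) = (fun N => \sum_(p <- s)
     (cRe (p.2 x * character p.1 x t) * series (exp_coeff (e * Yr g p.1 x)) N)).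
    apply/funext => N; rewrite psum_Gf Re_sum; apply: eq_bigr => p _.
    by rewrite ReM ReC ImC mulr0 subr0.
  rewrite /Glim Re_sum.
  have -> : \sum_(p <- s) cRe (p.2 x * character p.1 x t * ((expR (e * Yr g p.1 x))%:C)%C)
    = \sum_(p <- s) (cRe (p.2 x * character p.1 x t) * expR (e * Yr g p.1 x)).
    by apply: eq_bigr => p _; rewrite ReM ReC ImC mulr0 subr0.
  apply: cvg_bigsum => p; apply: cvgMl_tmp; exact: cvg_expser.
have -> : (fun N => cIm (psum g e (Gf s) N x t)) = (fun N => \sum_(p <- s)
   (cIm (p.2 x * character p.1 x t) * series (exp_coeff (e * Yr g p.1 x)) N)).
  apply/funext => N; rewrite psum_Gf Im_sum; apply: eq_bigr => p _.
  by rewrite ImM ReC ImC mulr0 add0r.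
rewrite /Glim Im_sum.
have -> : \sum_(p <- s) cIm (p.2 x * character p.1 x t * ((expR (e * Yr g p.1 x))%:C)%C)
  = \sum_(p <- s) (cIm (p.2 x * character p.1 x t) * expR (e * Yr g p.1 x)).
  by apply: eq_bigr => p _; rewrite ImM ReC ImC mulr0 add0r.
apply: cvg_bigsum => p; apply: cvgMl_tmp; exact: cvg_expser.
Qed.

Lemma hom_natpow (phi : R -> C) (H : forall a b, phi (a + b) = phi a * phi b)
  (H0 : phi 0 = 1) (k : nat) a : phi (k%:R * a) = phi a ^+ k.
Proof.
elim: k => [|k IH]; first by rewrite mul0r H0 expr0.
by rewrite -addn1 natrD mulrDl mul1r H IH exprD expr1.
Qed.

Lemma hom_pow (phi : R -> C) (H : forall a b, phi (a + b) = phi a * phi b)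
  (H0 : phi 0 = 1) (z : int) a : phi (z%:~R * a) = phi a ^ z.
Proof.
case: z => k.
  by rewrite /= hom_natpow.
rewrite NegzE mulrNz /= mulNr.
have E : phi (k.+1%:R * a) * phi (- (k.+1%:R * a)) = 1 by rewrite -H subrr H0.
rewrite -(mulr1_eq E) hom_natpow //.
Qed.

Lemma hom_sum (phi : R -> C) (H : forall a b, phi (a + b) = phi a * phi b)
  (H0 : phi 0 = 1) (F : 'I_n -> R) : phi (\sum_(j < n) F j) = \prod_(j < n) phi (F j).
Proof. exact: (big_morph phi H H0). Qed.

Lemma expRC_D (a b : R) : ((expR (a + b))%:C)%C = ((expR a)%:C)%C * ((expR b)%:C)%C :> C.
Proof. by rewrite expRD rmorphM. Qed.
Lemma expRC_0 : ((expR (0:R))%:C)%C = 1 :> C.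
Proof. by rewrite expR0 rmorph1. Qed.

Lemma wmonomialE g m x t :
  wmonomial g m x t = ((expR (Yr g m x))%:C)%C * character m x t.
Proof.
rewrite /wmonomial /character /dotR /Yr.
rewrite (hom_sum (fun a => ((expR a)%:C)%C) expRC_D expRC_0).
rewrite (hom_sum (@expi R) expiD expi0) -big_split /=; apply: eq_bigr => j _.
rewrite /wcoord expfzMl mxE.
by rewrite (hom_pow (fun a => ((expR a)%:C)%C) expRC_D expRC_0) (hom_pow (@expi R) expiD expi0).
Qed.

Definition Lc (b : 'rV[int]_n -> cfun R n) (s : seq ('rV[int]_n * C)) : cfun R n :=
  fun x t => \sum_(p <- s) p.2 * b p.1 x t.

Definition prodseq (s1 s2 : seq ('rV[int]_n * C)) :=
  [seq (p.1 + q.1, p.2 * q.2) | p <- s1, q <- s2].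

Section Lin.
Variable b : 'rV[int]_n -> cfun R n.
Hypothesis b_mul : forall m m' x t, b m x t * b m' x t = b (m + m') x t.
Hypothesis b_0 : forall x t, b 0 x t = 1.

Lemma Lc_add s1 s2 : (fun x t => Lc b s1 x t + Lc b s2 x t) = Lc b (s1 ++ s2).
Proof. by apply/funext => x; apply/funext => t; rewrite /Lc big_cat. Qed.

Lemma Lc_scale c s : (fun x t => c * Lc b s x t) = Lc b [seq (p.1, c * p.2) | p <- s].
Proof.
apply/funext => x; apply/funext => t; rewrite /Lc big_map mulr_sumr.
by apply: eq_bigr => p _; rewrite mulrA.
Qed.

Lemma Lc_one : (fun _ _ => 1) = Lc b [:: (0, 1)].
Proof. by apply/funext => x; apply/funext => t; rewrite /Lc big_cons big_nil b_0 mul1r addr0. Qed.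

Lemma Lc_mul s1 s2 : (fun x t => Lc b s1 x t * Lc b s2 x t) = Lc b (prodseq s1 s2).
Proof.
apply/funext => x; apply/funext => t.
rewrite /Lc /prodseq big_allpairs_dep mulr_suml; apply: eq_bigr => p _.
rewrite mulr_sumr; apply: eq_bigr => q _ /=.
by rewrite -b_mul; ring.
Qed.

Lemma Lc_single m : b m = Lc b [:: (m, 1)].
Proof. by apply/funext => x; apply/funext => t; rewrite /Lc big_cons big_nil mul1r addr0. Qed.

Lemma gen_Lc s : gen_algebra (range b) (Lc b s).
Proof.
move=> S [S1 SD SM SZ] Hb; elim: s => [|p s IH].
  have -> : Lc b [::] = (fun x t => 0 * (fun _ _ => 1) x t).
    by apply/funext => x; apply/funext => t; rewrite /Lc big_nil mul0r.
  exact: SZ.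
have -> : Lc b (p :: s) = (fun x t => (fun x t => p.2 * b p.1 x t) x t + Lc b s x t).
  by apply/funext => x; apply/funext => t; rewrite /Lc big_cons.
apply: SD => //; apply: SZ; apply: Hb; by exists p.1.
Qed.

Lemma gen_Lc_inv f : gen_algebra (range b) f -> exists s, f = Lc b s.
Proof.
move=> Hf; apply: (Hf [set f | exists s, f = Lc b s]).
  split.
  - by exists [:: (0, 1)]; exact: Lc_one.
  - by move=> f1 h1 [s1 ->] [s2 ->]; exists (s1 ++ s2); rewrite Lc_add.
  - by move=> f1 h1 [s1 ->] [s2 ->]; exists (prodseq s1 s2); rewrite Lc_mul.
  - by move=> c f1 [s1 ->]; exists [seq (p.1, c * p.2) | p <- s1]; rewrite Lc_scale.
by move=> f1 [m _ <-]; exists [:: (m, 1)]; exact: Lc_single.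
Qed.
End Lin.

Lemma char_mul m m' x t : character m x t * character m' x t = character (m + m') x t.
Proof. by rewrite /character dot_addm expiD. Qed.

Lemma char_0 x t : character (0 : 'rV[int]_n) x t = 1.
Proof. by rewrite /character dot_0m expi0. Qed.

Lemma Yr_add g m m' x : Yr g (m + m') x = Yr g m x + Yr g m' x.
Proof.
rewrite /Yr -big_split; apply: eq_bigr => j _.
by rewrite mxE intrD mulrDl.
Qed.

Lemma Yr_0 g x : Yr g 0 x = 0.
Proof. by rewrite /Yr big1 // => j _; rewrite mxE mul0r. Qed.

Lemma wm_mul g m m' x t : wmonomial g m x t * wmonomial g m' x t = wmonomial g (m + m') x t.
Proof.
rewrite !wmonomialE Yr_add expRC_D -char_mul; ring.
Qed.

Lemma wm_0 g x t : wmonomial g 0 x t = 1.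
Proof. by rewrite wmonomialE Yr_0 expRC_0 char_0 mul1r. Qed.

Definition liftc (s : seq ('rV[int]_n * C)) :=
  [seq (p.1, fun _ : 'rV[R]_n => p.2) | p <- s].
Definition liftw g (s : seq ('rV[int]_n * C)) :=
  [seq (p.1, fun x => p.2 * ((expR (Yr g p.1 x))%:C)%C) | p <- s].

Lemma Fc_Gf s : Lc (@character R n) s = Gf (liftc s).
Proof. by apply/funext => x; apply/funext => t; rewrite /Lc /Gf big_map. Qed.

Lemma Wc_Gf g s : Lc (wmonomial g) s = Gf (liftw g s).
Proof.
apply/funext => x; apply/funext => t; rewrite /Lc /Gf big_map.
by apply: eq_bigr => p _; rewrite wmonomialE /= mulrA.
Qed.

Lemma Glim_c g s : Glim g 1 (liftc s) = Lc (wmonomial g) s.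
Proof.
apply/funext => x; apply/funext => t; rewrite /Lc /Glim big_map.
by apply: eq_bigr => p _; rewrite wmonomialE /= mul1r; ring.
Qed.

Lemma Glim_w g s : Glim g (-1) (liftw g s) = Lc (@character R n) s.
Proof.
apply/funext => x; apply/funext => t; rewrite /Lc /Glim big_map.
apply: eq_bigr => p _ /=.
have E : ((expR (Yr g p.1 x))%:C)%C * ((expR (-1 * Yr g p.1 x))%:C)%C = 1 :> C.
  by rewrite -expRC_D mulN1r subrr expRC_0.
by rewrite -[RHS]mulr1 -E; ring.
Qed.

Lemma expiX_psum g f : expiX_partial g f = fun N => psum g 1 f N.
Proof.
apply/funext => N; apply/funext => x; apply/funext => t.
by rewrite /expiX_partial /psum rmorph1 mul1r.
Qed.

Lemma conv_Fc g s x t :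
  expiX_converges_to g (Lc (@character R n) s) x t (Lc (wmonomial g) s x t).
Proof.
rewrite /expiX_converges_to expiX_psum Fc_Gf -Glim_c.
exact: psum_cvg.
Qed.

Lemma cE' (z w : C) : z = w <-> cRe z = cRe w /\ cIm z = cIm w.
Proof. by split => [->|[]]; [|exact: cE]. Qed.

Lemma conv_unique g f x t z w :
  expiX_converges_to g f x t z -> expiX_converges_to g f x t w -> z = w.
Proof.
move=> [h1 h2] [h3 h4]; apply: cE; exact: (cvg_unique _ h1 h3) || exact: (cvg_unique _ h2 h4).
Qed.

Lemma Wc_eq g s1 s2 :
  Lc (@character R n) s1 = Lc (@character R n) s2 -> Lc (wmonomial g) s1 = Lc (wmonomial g) s2.
Proof.
move=> E; apply/funext => x; apply/funext => t.
apply: (@conv_unique g _ x t _ _ (conv_Fc g s1 x t)); rewrite E; exact: conv_Fc.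
Qed.

Lemma Xg_local g (f h : cfun R n) x0 : f x0 = h x0 -> Xg g f x0 = Xg g h x0.
Proof. by move=> E; apply/funext => t; rewrite /Xg /dtheta E. Qed.

Lemma iter_local g (f h : cfun R n) x0 k :
  f x0 = h x0 -> iter k (Xg g) f x0 = iter k (Xg g) h x0.
Proof.
move=> E; elim: k => [|k IH] //=; exact: Xg_local.
Qed.

Lemma psum_local g e (f h : cfun R n) x0 t N :
  f x0 = h x0 -> psum g e f N x0 t = psum g e h N x0 t.
Proof.
move=> E; rewrite /psum; apply: eq_bigr => k _.
by rewrite (@iter_local g f h x0 k E).
Qed.

Lemma Lc_inj g x0 s1 s2 :
  Lc (wmonomial g) s1 x0 = Lc (wmonomial g) s2 x0 ->
  Lc (@character R n) s1 = Lc (@character R n) s2.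
Proof.
rewrite !Wc_Gf => E; apply/funext => x; apply/funext => t.
have -> : Lc (@character R n) s1 x t = Lc (@character R n) s1 x0 t by [].
have -> : Lc (@character R n) s2 x t = Lc (@character R n) s2 x0 t by [].
have [h1 h2] := psum_cvg g (-1) (liftw g s1) x0 t.
have [h3 h4] := psum_cvg g (-1) (liftw g s2) x0 t.
rewrite Glim_w in h1 h2; rewrite Glim_w in h3 h4.
have P : forall N, psum g (-1) (Gf (liftw g s1)) N x0 t =
         psum g (-1) (Gf (liftw g s2)) N x0 t.
  by move=> N; apply: psum_local.
have P1 : (fun N => cRe (psum g (-1) (Gf (liftw g s1)) N x0 t)) =
         (fun N => cRe (psum g (-1) (Gf (liftw g s2)) N x0 t)).
  by apply/funext => N; rewrite P.
have P2 : (fun N => cIm (psum g (-1) (Gf (liftw g s1)) N x0 t)) =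
         (fun N => cIm (psum g (-1) (Gf (liftw g s2)) N x0 t)).
  by apply/funext => N; rewrite P.
rewrite P1 in h1; rewrite P2 in h2.
apply: cE; [exact: (cvg_unique _ h1 h3) | exact: (cvg_unique _ h2 h4)].
Qed.
Lemma main_aux (d : nat) (nu : 'I_d -> 'rV[int]_n)
  (lam : 'I_d -> R) (g : 'rV[R]_n -> R) :
  Delzant nu lam -> symplectic_potential nu lam g ->
  (forall (m : 'rV[int]_n) (x theta : 'rV[R]_n), polytope_int nu lam x ->
     expiX_converges_to g (@character R n m) x theta (wmonomial g m x theta))
  /\
  exists Phi : cfun R n -> cfun R n,
    let A := gen_algebra (range (@character R n)) in
    let B := gen_algebra (range (wmonomial g)) in
    let agree (f h : cfun R n) :=
      forall x theta, polytope_int nu lam x -> f x theta = h x theta in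
    [/\ (forall f, A f -> forall x theta, polytope_int nu lam x ->
           expiX_converges_to g f x theta (Phi f x theta)),
        (forall m, agree (Phi (@character R n m)) (wmonomial g m)),
        (forall f h, A f -> A h ->
           [/\ agree (Phi (fun x t => f x t + h x t))
                     (fun x t => Phi f x t + Phi h x t),
               agree (Phi (fun x t => f x t * h x t))
                     (fun x t => Phi f x t * Phi h x t),
               (forall c : R[i], agree (Phi (fun x t => c * f x t))
                                       (fun x t => c * Phi f x t)) &
               agree (Phi (fun _ _ => 1)) (fun _ _ => 1)]),
        (forall f h, A f -> A h -> agree (Phi f) (Phi h) -> f = h) &
        ((forall f, A f -> exists h, B h /\ agree (Phi f) h) /\
         (forall h, B h -> exists f, A f /\ agree (Phi f) h))].
Proof.
move=> [_ [x0 Hx0] _ _] _.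
have chm : forall m m' x t, (@character R n) m x t * (@character R n) m' x t = (@character R n) (m + m') x t by exact: char_mul.
have ch0 : forall x t, (@character R n) 0 x t = 1 by exact: char_0.
have wmm : forall m m' x t, (wmonomial g) m x t * (wmonomial g) m' x t = (wmonomial g) (m + m') x t by exact: wm_mul.
have wm0 : forall x t, (wmonomial g) 0 x t = 1 by exact: wm_0.
split.
  move=> m x t _.
  have -> : wmonomial g m x t = Lc (wmonomial g) [:: (m, 1)] x t by rewrite -Lc_single.
  rewrite (Lc_single (@character R n) m); exact: conv_Fc.
pose Phi := fun f : cfun R n => Lc (wmonomial g) (xget [::] [set s | f = Lc (@character R n) s]).
have Phi_spec : forall f s, f = Lc (@character R n) s -> Phi f = Lc (wmonomial g) s.
  move=> f s Hs; apply: Wc_eq.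
  have : [set s | f = Lc (@character R n) s] (xget [::] [set s | f = Lc (@character R n) s]).
    by apply: xgetPex; exists s.
  by move=> /= <-.
exists Phi => A B agree.
have Ainv : forall f, A f -> exists s, f = Lc (@character R n) s.
  by move=> f Af; apply: (gen_Lc_inv _ chm ch0).
split.
- move=> f Af x t _; have [s Hs] := Ainv f Af.
  rewrite (Phi_spec f s Hs) Hs; exact: conv_Fc.
- move=> m x t _; rewrite (Phi_spec _ [:: (m, 1)]); last exact: Lc_single.
  by rewrite -Lc_single.
- move=> f h Af Ah; have [s1 H1] := Ainv f Af; have [s2 H2] := Ainv h Ah.
  split.
  + move=> x t _; rewrite (Phi_spec _ (s1 ++ s2)); last by rewrite H1 H2 Lc_add.
    by rewrite (Phi_spec _ _ H1) (Phi_spec _ _ H2) -Lc_add.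
  + move=> x t _; rewrite (Phi_spec _ (prodseq s1 s2)); last by rewrite H1 H2 (Lc_mul _ chm).
    by rewrite (Phi_spec _ _ H1) (Phi_spec _ _ H2) -(Lc_mul _ wmm).
  + move=> c x t _; rewrite (Phi_spec _ [seq (p.1, c * p.2) | p <- s1]); last by rewrite H1 Lc_scale.
    by rewrite (Phi_spec _ _ H1) -Lc_scale.
  + move=> x t _; rewrite (Phi_spec _ [:: (0, 1)]); last exact: (Lc_one _ ch0).
    by rewrite -(Lc_one _ wm0).
- move=> f h Af Ah Hag; have [s1 H1] := Ainv f Af; have [s2 H2] := Ainv h Ah.
  rewrite H1 H2; apply: (@Lc_inj g x0).
  apply/funext => t; rewrite -(Phi_spec _ _ H1) -(Phi_spec _ _ H2); exact: Hag.
- split.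
  + move=> f Af; have [s Hs] := Ainv f Af.
    exists (Lc (wmonomial g) s); split; last by move=> x t _; rewrite (Phi_spec _ _ Hs).
    exact: (gen_Lc _ s).
  + move=> h Bh; have [s Hs] := gen_Lc_inv _ wmm wm0 _ Bh.
    exists (Lc (@character R n) s); split; first exact: gen_Lc.
    by move=> x t _; rewrite (Phi_spec _ s) // Hs.
Qed.

End S.

Theorem mainTheorem6 (R : realType) (n d : nat) (nu : 'I_d -> 'rV[int]_n)
  (lam : 'I_d -> R) (g : 'rV[R]_n -> R) :
  Delzant nu lam -> symplectic_potential nu lam g ->
  (* e^{iX_g} e^{i m.theta} converges and equals w^m on \check X_P *)
  (forall (m : 'rV[int]_n) (x theta : 'rV[R]_n), polytope_int nu lam x ->
     expiX_converges_to g (@character R n m) x theta (wmonomial g m x theta))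
  /\
  (* e^{iX_g} induces an algebra isomorphism A -> B, e^{im.theta} |-> w^m *)
  exists Phi : cfun R n -> cfun R n,
    let A := gen_algebra (range (@character R n)) in
    let B := gen_algebra (range (wmonomial g)) in
    let agree (f h : cfun R n) :=
      forall x theta, polytope_int nu lam x -> f x theta = h x theta in
    [/\ (forall f, A f -> forall x theta, polytope_int nu lam x ->
           expiX_converges_to g f x theta (Phi f x theta)),
        (forall m, agree (Phi (@character R n m)) (wmonomial g m)),
        (forall f h, A f -> A h ->
           [/\ agree (Phi (fun x t => f x t + h x t))
                     (fun x t => Phi f x t + Phi h x t),
               agree (Phi (fun x t => f x t * h x t))
                     (fun x t => Phi f x t * Phi h x t),
               (forall c : R[i], agree (Phi (fun x t => c * f x t))
                                       (fun x t => c * Phi f x t)) &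
               agree (Phi (fun _ _ => 1)) (fun _ _ => 1)]),
        (forall f h, A f -> A h -> agree (Phi f) (Phi h) -> f = h) &
        ((forall f, A f -> exists h, B h /\ agree (Phi f) h) /\
         (forall h, B h -> exists f, A f /\ agree (Phi f) h))].
Proof. exact: main_aux. Qed.
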